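(* Let $d\ge0$ and let $a\in\mathbb K[A]$ be an irreducible, homogeneous, isobaric element invariant under $UT_3$ (i.e. $D_1(a)=D_2(a)=D_3(a)=0$) with $\mathrm{ord}_1(a)=0$ and $\mathrm{ord}_2(a)=d$. Then: (i) the vector space $\bar C_d$ spanned by the elements $\frac{(-1)^{i+j}}{d(d-1)\cdots(d-i-j+1)}\hat D_2^{j}\hat D_3^{i}(a)$, $i+j\le d$, is an irreducible $\mathfrak{sl}_3$-submodule of $\mathbb K[A]$ isomorphic to $\Gamma_{0,d}$; (ii) the element $$\sum_{i+j\le d}\frac{(-1)^{i+j}}{i!\,j!}\,\hat D_2^{j}\hat D_3^{i}(a)\,u_3^{d-(i+j)}u_1^{i}u_2^{j}\in\mathbb K[A,u_1,u_2,u_3]$$ (the Casimir element of $\bar C_d$ and $S^d(\langle u_1,u_2,u_3\rangle)$ with respect to dual bases) is a contravariant of order $d$ of the ternary form of degree $n$.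
   Context: $\mathbb K$ is a field of characteristic $0$, $n\ge1$, $\mathbb K[A]=\mathbb K[a_{i,j}: i,j\ge0,\ i+j\le n]$ is the coordinate ring of the space of ternary forms $\sum_{i+j\le n}\frac{n!}{i!j!(n-i-j)!}a_{i,j}x_1^{n-i-j}x_2^ix_3^j$. $\mathfrak{sl}_3$ acts by derivations on $\mathbb K[A,u_1,u_2,u_3]$; the operators for $E_{12},E_{23},E_{13},E_{21},E_{32},E_{31},E_{11}-E_{22},E_{22}-E_{33}$ are $D_1,D_2,D_3,\hat D_1,\hat D_2,\hat D_3,E_1,E_2$. On generators of $\mathbb K[A]$ (with $a_{i,j}=0$ if an index is negative or $i+j>n$): $D_1(a_{i,j})=i a_{i-1,j}$, $D_2(a_{i,j})=j a_{i+1,j-1}$, $D_3(a_{i,j})=j a_{i,j-1}$, $\hat D_1(a_{i,j})=(n-i-j)a_{i+1,j}$, $\hat D_2(a_{i,j})=i a_{i-1,j+1}$, $\hat D_3(a_{i,j})=(n-i-j)a_{i,j+1}$, $E_1(a_{i,j})=(n-2i-j)a_{i,j}$, $E_2(a_{i,j})=(i-j)a_{i,j}$. On the $u$'s (dual of the standard module, $x_1u_1+x_2u_2+x_3u_3$ invariant): $D_1=u_1\partial_{u_2}$, $D_2=u_2\partial_{u_3}$, $D_3=u_1\partial_{u_3}$, $\hat D_1=u_2\partial_{u_1}$, $\hat D_2=u_3\partial_{u_2}$, $\hat D_3=u_3\partial_{u_1}$, $E_1=u_1\partial_{u_1}-u_2\partial_{u_2}$, $E_2=u_2\partial_{u_2}-u_3\partial_{u_3}$.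 Isobaric means an eigenvector of both $E_1,E_2$; $\mathrm{ord}_i(a)=\max\{s\ge0:\hat D_i^s(a)\ne0\}$. ''Irreducible'' element of $\mathbb K[A]^{UT_3}$ is used in the classical sense (nonzero, not a polynomial in $UT_3$-invariants of smaller degree). A contravariant of order $d$ is an element of $\mathbb K[A,u_1,u_2,u_3]$ homogeneous of degree $d$ in the $u$'s and annihilated by all these derivations (equivalently $SL_3$-invariant). $\Gamma_{m_1,m_2}$ denotes the irreducible finite-dimensional $\mathfrak{sl}_3$-module of highest weight $[m_1,m_2]$. *)

(* Defs.v *)
From HB Require Import structures.
From mathcomp Require Import all_boot all_algebra.
From mathcomp Require Import mpoly.

Set Implicit Arguments.
Unset Strict Implicit.
Unset Printing Implicit Defensive.

Import GRing.Theory.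
Local Open Scope ring_scope.

(* Index set of the coefficients a_{i,j}, i + j <= n. *)
Notation AIdx n := {p : 'I_n.+1 * 'I_n.+1 | (p.1 + p.2 <= n)%N}.

Section Defs.
Variables (K : fieldType) (n : nat).

(* Variables of K[A, u1, u2, u3]: first the a_{i,j}, then u1, u2, u3. *)
Definition nv : nat := (#|{: AIdx n}| + 3)%N.
Definition KAu := {mpoly K[nv]}.

Definition avar (p : AIdx n) : 'I_nv := lshift 3 (enum_rank p).
Definition uvar (k : 'I_3) : 'I_nv := rshift #|{: AIdx n}| k.

(* a_{i,j} as a polynomial; 0 when i + j > n (negative indices never occur
   below, since they only appear with coefficient 0). *)
Definition aX (i j : nat) : KAu :=
  if (i + j <= n)%N then
    match (insub (inord i, inord j) : option (AIdx n)) with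
    | Some p => 'X_(avar p)
    | None => 0
    end
  else 0.

Definition uX (k : 'I_3) : KAu := 'X_(uvar k).
Definition u1 : KAu := uX 0.
Definition u2 : KAu := uX 1.
Definition u3 : KAu := uX 2.

Definition gen_img (fa : nat -> nat -> KAu) (fu : 'I_3 -> KAu) (k : 'I_nv) : KAu :=
  match split (k : 'I_(#|{: AIdx n}| + 3)) with
  | inl r => let p := enum_val r in fa (val (val p).1) (val (val p).2)
  | inr s => fu s
  end.

Definition der (fa : nat -> nat -> KAu) (fu : 'I_3 -> KAu) (p : KAu) : KAu :=
  \sum_(k < nv) gen_img fa fu k * mderiv k p.

Definition sc (c : nat) (q : KAu) : KAu := (c%:R : K) *: q.
Definition scz (c : int) (q : KAu) : KAu := (c%:~R : K) *: q.

(* E_{12}, E_{23}, E_{13} *)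
Definition D1 := der (fun i j => sc i (aX i.-1 j))
  (fun s => if val s == 1%N then u1 else 0).
Definition D2 := der (fun i j => sc j (aX i.+1 j.-1))
  (fun s => if val s == 2%N then u2 else 0).
Definition D3 := der (fun i j => sc j (aX i j.-1))
  (fun s => if val s == 2%N then u1 else 0).
(* E_{21}, E_{32}, E_{31} *)
Definition hD1 := der (fun i j => sc (n - i - j) (aX i.+1 j))
  (fun s => if val s == 0%N then u2 else 0).
Definition hD2 := der (fun i j => sc i (aX i.-1 j.+1))
  (fun s => if val s == 1%N then u3 else 0).
Definition hD3 := der (fun i j => sc (n - i - j) (aX i j.+1))
  (fun s => if val s == 0%N then u3 else 0).
(* E_{11}-E_{22}, E_{22}-E_{33} *)
Definition E1 := der (fun i j => scz (n%:Z - (2 * i)%N%:Z - j%:Z) (aX i j))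
  (fun s => if val s == 0%N then u1 else if val s == 1%N then - u2 else 0).
Definition E2 := der (fun i j => scz (i%:Z - j%:Z) (aX i j))
  (fun s => if val s == 1%N then u2 else if val s == 2%N then - u3 else 0).

Definition inKA (p : KAu) : Prop :=
  forall m, m \in msupp p -> forall k : 'I_3, m (uvar k) = 0%N.

Definition homogA (p : KAu) : Prop :=
  exists e : nat, forall m, m \in msupp p ->
    (\sum_(q : AIdx n) m (avar q))%N = e.

Definition homogU (d : nat) (p : KAu) : Prop :=
  forall m, m \in msupp p -> (\sum_(k < 3) m (uvar k))%N = d.

Definition isobaric (p : KAu) : Prop :=
  p != 0 /\ exists l1 l2 : K, E1 p = l1 *: p /\ E2 p = l2 *: p.

Definition UTinv (p : KAu) : Prop := D1 p = 0 /\ D2 p = 0 /\ D3 p = 0.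

Inductive in_alg (S : KAu -> Prop) : KAu -> Prop :=
| alg_const c : in_alg S (c%:MP)
| alg_gen s : S s -> in_alg S s
| alg_add p q : in_alg S p -> in_alg S q -> in_alg S (p + q)
| alg_mul p q : in_alg S p -> in_alg S q -> in_alg S (p * q).

(* irreducible element of K[A]^{UT_3} (classical sense): nonzero and not a
   polynomial in UT_3-invariants (of K[A]) of smaller degree. *)
Definition irreducible_inv (a : KAu) : Prop :=
  a != 0 /\
  ~ in_alg (fun b => inKA b /\ UTinv b /\ (msize b < msize a)%N) a.

Definition is_ord (D : KAu -> KAu) (a : KAu) (s : nat) : Prop :=
  iter s D a != 0 /\ forall t, (s < t)%N -> iter t D a = 0.

Definition subspace (W : KAu -> Prop) : Prop :=
  W 0 /\ (forall p q, W p -> W q -> W (p + q)) /\ (forall (c : K) p, W p -> W (c *: p)).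

Definition span (s : seq KAu) (p : KAu) : Prop :=
  exists c : 'I_(size s) -> K, p = \sum_(i < size s) c i *: s`_i.

Definition sl3_stable (W : KAu -> Prop) : Prop :=
  forall p, W p ->
    W (D1 p) /\ W (D2 p) /\ W (D3 p) /\ W (hD1 p) /\ W (hD2 p) /\ W (hD3 p) /\
    W (E1 p) /\ W (E2 p).

Definition sl3_submodule (W : KAu -> Prop) : Prop := subspace W /\ sl3_stable W.

Definition sl3_irreducible (M : KAu -> Prop) : Prop :=
  (exists p, M p /\ p != 0) /\
  forall W, sl3_submodule W -> (forall p, W p -> M p) ->
    (forall p, W p -> p = 0) \/ (forall p, M p -> W p).

Definition highest_weight_vector (v : KAu) (m1 m2 : nat) : Prop :=
  v != 0 /\ D1 v = 0 /\ D2 v = 0 /\ D3 v = 0 /\ E1 v = (m1%:R : K) *: v /\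
  E2 v = (m2%:R : K) *: v.

(* M is an irreducible finite-dimensional sl_3-submodule isomorphic to
   Gamma_{m1,m2}, i.e. irreducible with highest weight [m1, m2]. *)
Definition irred_submodule_Gamma (M : KAu -> Prop) (m1 m2 : nat) : Prop :=
  [/\ sl3_submodule M,
      (exists s : seq KAu, forall p, M p <-> span s p),
      sl3_irreducible M
    & exists v, M v /\ highest_weight_vector v m1 m2].

Definition Cbar (a : KAu) (d : nat) (p : KAu) : Prop :=
  exists c : nat -> nat -> K,
    p = \sum_(i < d.+1) \sum_(j < d.+1 | (i + j <= d)%N)
          c i j *: (((-1) ^+ (i + j) / (d ^_ (i + j))%:R : K)
                    *: iter j hD2 (iter i hD3 a)).

Definition casimir (a : KAu) (d : nat) : KAu :=
  \sum_(i < d.+1) \sum_(j < d.+1 | (i + j <= d)%N)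
     (((-1) ^+ (i + j) / (i`! * j`!)%:R : K)
       *: (iter j hD2 (iter i hD3 a) * u3 ^+ (d - (i + j)) * u1 ^+ i * u2 ^+ j)).

Definition contravariant (d : nat) (p : KAu) : Prop :=
  homogU d p /\
  (D1 p = 0 /\ D2 p = 0 /\ D3 p = 0 /\ hD1 p = 0 /\ hD2 p = 0 /\ hD3 p = 0 /\
   E1 p = 0 /\ E2 p = 0).

End Defs.

(* Main.v *)
From HB Require Import structures.
Require Import Defs.
From mathcomp Require Import all_boot all_algebra.
From mathcomp Require Import mpoly.
From mathcomp Require Import ring zify.
From Stdlib Require Import Classical.

Set Implicit Arguments.
Unset Strict Implicit.
Unset Printing Implicit Defensive.

Import GRing.Theory.
Local Open Scope ring_scope.
Section PartA.
Variables (K : fieldType) (n : nat).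
Local Notation P := (KAu K n).

Definition isder (f : P -> P) :=
  [/\ forall p q, f (p + q) = f p + f q,
      forall (c : K) p, f (c *: p) = c *: f p
    & forall p q, f (p * q) = f p * q + p * f q].

Lemma der_isder fa fu : isder (der fa fu).
Proof.
split.
- move=> p q; rewrite /der -big_split /=; apply: eq_bigr => k _.
  by rewrite mderivD mulrDr.
- move=> c p; rewrite /der scaler_sumr; apply: eq_bigr => k _.
  by rewrite mderivZ scalerAr.
- move=> p q; rewrite /der mulr_suml mulr_sumr -big_split /=; apply: eq_bigr => k _.
  by rewrite mderivM; ring.
Qed.

Section IsDer.
Variable f : P -> P.
Hypothesis hf : isder f.
Lemma isder0 : f 0 = 0.
Proof. case: hf => hD _ _; apply: (addrI (f 0)); by rewrite -hD !addr0. Qed.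
Lemma isderD p q : f (p + q) = f p + f q. Proof. by case: hf. Qed.
Lemma isderZ c p : f (c *: p) = c *: f p. Proof. by case: hf. Qed.
Lemma isderM p q : f (p * q) = f p * q + p * f q. Proof. by case: hf. Qed.
Lemma isderN p : f (- p) = - f p.
Proof. by rewrite -scaleN1r isderZ scaleN1r. Qed.
Lemma isderB p q : f (p - q) = f p - f q.
Proof. by rewrite isderD isderN. Qed.
Lemma isder_sum (I : Type) (r : seq I) (Q : pred I) (F : I -> P) :
  f (\sum_(i <- r | Q i) F i) = \sum_(i <- r | Q i) f (F i).
Proof. by apply: (big_morph f isderD isder0). Qed.
Lemma isder1 : f 1 = 0.
Proof.
have h := isderM 1 1; rewrite !mul1r mulr1 in h.
by apply: (addrI (f 1)); rewrite -h addr0.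
Qed.
Lemma isderC c : f c%:MP = 0.
Proof. by rewrite -alg_mpolyC isderZ isder1 scaler0. Qed.
Lemma isderX k p : f (p ^+ k) = (k%:R : K) *: (p ^+ k.-1 * f p).
Proof.
elim: k => [|k IH]; first by rewrite expr0 isder1 scale0r.
rewrite exprS isderM IH -scalerAr mulrA -exprS.
case: k {IH} => [|k] /=.
  by rewrite scale0r addr0 scale1r mulrC.
rewrite [f p * _]mulrC -{1}[p ^+ k.+1 * f p]scale1r -scalerDl.
by congr (_ *: _); rewrite addrC natr1.
Qed.
End IsDer.

Lemma isder_zero (f : P -> P) : isder f -> (forall k, f 'X_k = 0) -> forall p, f p = 0.
Proof.
move=> hf hX; elim/mpolyind => [|c m p _ _ IH]; first exact: isder0.
rewrite (isderD hf) IH addr0 (isderZ hf).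
suff -> : f 'X_[m] = 0 by rewrite scaler0.
rewrite mpolyXE_id; elim/big_rec: _ => [|i x _ Hx]; first exact: isder1.
by rewrite (isderM hf) Hx mulr0 (isderX hf) hX mulr0 scaler0 mul0r addr0.
Qed.

Lemma isder_lin (f g : P -> P) (c1 c2 : K) : isder f -> isder g ->
  isder (fun p => c1 *: f p + c2 *: g p).
Proof.
move=> hf hg; split.
- by move=> p q; rewrite (isderD hf) (isderD hg) !scalerDr addrACA.
- by move=> c p; rewrite (isderZ hf) (isderZ hg) scalerDr !scalerA mulrC [c2 * _]mulrC.
- move=> p q; rewrite (isderM hf) (isderM hg).
  by rewrite !scalerDr mulrDl mulrDr -!scalerAl -!scalerAr addrACA.
Qed.

Lemma comm_rel (f g h : P -> P) : isder f -> isder g -> isder h ->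
  (forall k, f (g 'X_k) = g (f 'X_k) + h 'X_k) ->
  forall p, f (g p) = g (f p) + h p.
Proof.
move=> hf hg hh hX p.
pose dl q := f (g q) - (g (f q) + h q).
have hd : isder dl.
  split.
  - move=> x y; rewrite /dl !(isderD hf, isderD hg, isderD hh); ring.
  - move=> c x; rewrite /dl !(isderZ hf, isderZ hg, isderZ hh).
    by rewrite -scalerDr -scalerBr.
  - move=> x y; rewrite /dl !(isderM hf, isderM hg, isderM hh).
    rewrite !(isderD hf, isderD hg) !(isderM hf, isderM hg); ring.
have := isder_zero hd (fun k => _) p.
rewrite /dl => /(_ _)/eqP; rewrite subr_eq0 => /(_ _)/eqP; apply.
by move=> k; rewrite /dl hX subrr.
Qed.

End PartA.
Section PartB.
Variables (K : fieldType) (n : nat).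
Local Notation P := (KAu K n).
Implicit Types (fa : nat -> nat -> P) (fu : 'I_3 -> P).

Lemma mderivXU (k l : 'I_(nv n)) : mderiv l ('X_k : P) = (k == l)%:R.
Proof.
rewrite mderivX mnm1E; case: eqP => [->|_]; last by rewrite scale0r.
have -> : (U_(l) - U_(l) = 0)%MM by apply/mnmP => i; rewrite mnmBE mnm0E subnn.
by rewrite mpolyX0 scale1r.
Qed.

Lemma derX fa fu k : der fa fu ('X_k : P) = gen_img fa fu k.
Proof.
rewrite /der (bigD1 k) //= mderivXU eqxx mulr1 big1 ?addr0 // => l /negPf hl.
by rewrite mderivXU eq_sym hl mulr0.
Qed.

Lemma gen_avar fa fu (p : AIdx n) :
  gen_img fa fu (avar p) = fa (val (val p).1) (val (val p).2).
Proof.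
rewrite /gen_img /avar.
by rewrite -[lshift _ _]/(unsplit (inl (enum_rank p))) unsplitK enum_rankK.
Qed.

Lemma gen_uvar fa fu (s : 'I_3) : gen_img fa fu (uvar n s) = fu s.
Proof. by rewrite /gen_img /uvar -[rshift _ _]/(unsplit (inr s)) unsplitK. Qed.

Lemma aX_out i j : ~~ (i + j <= n)%N -> aX K n i j = 0.
Proof. by rewrite /aX => /negPf ->. Qed.

Lemma aX_in i j : (i + j <= n)%N ->
  exists p : AIdx n, aX K n i j = 'X_(avar p) /\ val (val p).1 = i /\ val (val p).2 = j.
Proof.
move=> hij; have hi : (i < n.+1)%N by lia.
have hj : (j < n.+1)%N by lia.
have hP : ((inord i : 'I_n.+1) + (inord j : 'I_n.+1) <= n)%N by rewrite !inordK.
exists (Sub (inord i, inord j) hP); rewrite /aX hij insubT /=.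
by rewrite !inordK.
Qed.

Lemma Xavar (p : AIdx n) : ('X_(avar p) : P) = aX K n (val (val p).1) (val (val p).2).
Proof.
have hP := valP p.
rewrite /aX hP; case: insubP => [q _ hq|]; last by rewrite /= !inord_val hP.
congr 'X_(avar _); apply: val_inj; rewrite hq /=.
by rewrite !inord_val; case: (val p).
Qed.

Lemma derA fa fu i j : der fa fu (aX K n i j) = if (i + j <= n)%N then fa i j else 0.
Proof.
case: ifP => hij.
  by have [p [-> [h1 h2]]] := aX_in hij; rewrite derX gen_avar h1 h2.
by rewrite aX_out ?hij // (isder0 (der_isder fa fu)).
Qed.

Lemma derU fa fu s : der fa fu (uX K n s) = fu s.
Proof. by rewrite /uX derX gen_uvar. Qed.

Lemma gen_cases (k : 'I_(nv n)) : (exists p : AIdx n, k = avar p) \/ (exists s, k = uvar n s).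
Proof.
rewrite -[k]splitK; case: (split k) => [r|s] /=; [left|right].
  by exists (enum_val r); rewrite /avar enum_valK.
by exists s.
Qed.

Lemma comm_gen (f g h : P -> P) : isder f -> isder g -> isder h ->
  (forall i j, (i + j <= n)%N -> f (g (aX K n i j)) = g (f (aX K n i j)) + h (aX K n i j)) ->
  (forall s, f (g (uX K n s)) = g (f (uX K n s)) + h (uX K n s)) ->
  forall p, f (g p) = g (f p) + h p.
Proof.
move=> hf hg hh hA hU; apply: comm_rel => // k.
case: (gen_cases k) => [[p ->]|[s ->]]; last exact: hU.
rewrite Xavar; apply: hA; exact: (valP p).
Qed.

End PartB.
Lemma intr_eq (R : pzRingType) (x y : int) : x = y -> x%:~R = y%:~R :> R.
Proof. by move=> ->. Qed.
Lemma intr_eq0 (R : pzRingType) (x : int) : x = 0 -> x%:~R = 0 :> R.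
Proof. by move=> ->. Qed.

Ltac ksolve K :=
  repeat (case: ifPn => ?); rewrite ?(mul0r, mulr0, add0r, addr0, mulr1, mul1r, mulN1r, mulrN1); try done;
  rewrite ?pmulrn; do 3 rewrite -?intrM -?intrD -?intrB -?intrN;
  first [ apply: intr_eq; nia | apply: intr_eq0; nia | apply/esym; apply: intr_eq0; nia ].

Ltac usolve :=
  let s := fresh "s" in let Hs := fresh "Hs" in
  move=> s; case: s => [[|[|[|//]]] Hs];
  unfold Defs.D1, Defs.D2, Defs.D3, Defs.hD1, Defs.hD2, Defs.hD3, Defs.E1, Defs.E2;
  rewrite ?derU /=; unfold u1, u2, u3;
  rewrite ?(isder0 (der_isder _ _), isderN (der_isder _ _)) ?derU /=;
  rewrite ?(scale0r, scaler0, addr0, add0r, scale1r, scaleN1r, opprK, oppr0, addNr, subrr, addrN); try done.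

Section PartC.
Variables (K : fieldType) (n : nat).
Local Notation P := (KAu K n).
Local Notation D1 := (@D1 K n).
Local Notation D2 := (@D2 K n).
Local Notation D3 := (@D3 K n).
Local Notation hD1 := (@hD1 K n).
Local Notation hD2 := (@hD2 K n).
Local Notation hD3 := (@hD3 K n).
Local Notation E1 := (@E1 K n).
Local Notation E2 := (@E2 K n).
Local Notation aX := (aX K n).

Lemma derZ fa fu c (p : P) : der fa fu (c *: p) = c *: der fa fu p.
Proof. exact: (isderZ (der_isder fa fu)). Qed.

Lemma ifZ (b : bool) (c : K) (v : P) : (if b then c *: v else 0) = (if b then c else 0) *: v.
Proof. by case: b; rewrite ?scale0r. Qed.

Lemma zero_scal (v : P) (c : K) : c = 0 -> 0 = c *: v.
Proof. by move=> ->; rewrite scale0r. Qed.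

Ltac fin K := first [ done | congr (_ *: _); ksolve K | apply: zero_scal; ksolve K
                    | apply/esym; apply: zero_scal; ksolve K ].

Ltac asolve K :=
  let i := fresh "i" in let j := fresh "j" in let hij := fresh "hij" in
  move=> i j hij;
  unfold Defs.D1, Defs.D2, Defs.D3, Defs.hD1, Defs.hD2, Defs.hD3, Defs.E1, Defs.E2;
  rewrite !derA hij /sc /scz !derZ !derA !ifZ !scalerA;
  case: i hij => [|i] hij; case: j hij => [|j] hij /=;
  rewrite ?(mulr0, mul0r, scale0r, addr0, add0r) -?scalerDl.

Lemma rel_gen fa fu ga gu xa xu ya yu (c1 c2 : K) :
  let f := der fa fu in let g := der ga gu in
  let X := der xa xu in let Y := der ya yu in
  (forall i j, (i + j <= n)%N -> f (g (aX i j)) = g (f (aX i j)) + (c1 *: X (aX i j) + c2 *: Y (aX i j))) ->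
  (forall s, f (g (uX K n s)) = g (f (uX K n s)) + (c1 *: X (uX K n s) + c2 *: Y (uX K n s))) ->
  forall p, f (g p) = g (f p) + (c1 *: X p + c2 *: Y p).
Proof.
move=> f g X Y hA hU; apply: comm_gen => //; try exact: der_isder.
exact: isder_lin (der_isder _ _) (der_isder _ _).
Qed.

Lemma R1 p : hD2 (hD3 p) = hD3 (hD2 p).
Proof.
rewrite -[RHS]addr0.
have -> : (0 : P) = 0 *: hD3 p + 0 *: hD3 p by rewrite scale0r addr0.
apply: rel_gen => [i j hij|].
  rewrite /hD2 /hD3 !derA hij /sc !derZ !derA.
  rewrite ?scale0r ?addr0 !ifZ !scalerA.
  by case: i hij => [|i] hij /=; congr (_ *: _); ksolve K.
usolve.
Qed.

Lemma R2 p : hD1 (hD3 p) = hD3 (hD1 p).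
Proof.
rewrite (_ : hD3 (hD1 p) = hD3 (hD1 p) + (0 *: hD3 p + 0 *: hD3 p)); last by rewrite scale0r addr0 addr0.
apply: rel_gen; [asolve K; fin K | usolve; ring].
Qed.

Lemma R3 p : hD1 (hD2 p) = hD2 (hD1 p) - hD3 p.
Proof.
rewrite (_ : hD2 (hD1 p) - hD3 p = hD2 (hD1 p) + ((-1) *: hD3 p + 0 *: hD3 p)); last by rewrite scale0r addr0 scaleN1r.
apply: rel_gen; [asolve K; fin K | usolve; ring].
Qed.

Lemma R4 p : D1 (hD3 p) = hD3 (D1 p) - hD2 p.
Proof.
rewrite (_ : hD3 (D1 p) - hD2 p = hD3 (D1 p) + ((-1) *: hD2 p + 0 *: hD2 p)); last by rewrite scale0r addr0 scaleN1r.
apply: rel_gen; [asolve K; fin K | usolve; ring].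
Qed.

Lemma R5 p : D1 (hD2 p) = hD2 (D1 p).
Proof.
rewrite (_ : hD2 (D1 p) = hD2 (D1 p) + (0 *: hD3 p + 0 *: hD3 p)); last by rewrite scale0r addr0 addr0.
apply: rel_gen; [asolve K; fin K | usolve; ring].
Qed.

Lemma R6 p : D2 (hD2 p) = hD2 (D2 p) + E2 p.
Proof.
rewrite (_ : hD2 (D2 p) + E2 p = hD2 (D2 p) + (1 *: E2 p + 0 *: E2 p)); last by rewrite scale0r addr0 scale1r.
apply: rel_gen; [asolve K; fin K | usolve; ring].
Qed.

Lemma R7 p : D2 (hD3 p) = hD3 (D2 p) + hD1 p.
Proof.
rewrite (_ : hD3 (D2 p) + hD1 p = hD3 (D2 p) + (1 *: hD1 p + 0 *: hD1 p)); last by rewrite scale0r addr0 scale1r.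
apply: rel_gen; [asolve K; fin K | usolve; ring].
Qed.

Lemma R8 p : D3 (hD3 p) = hD3 (D3 p) + (E1 p + E2 p).
Proof.
rewrite (_ : hD3 (D3 p) + (E1 p + E2 p) = hD3 (D3 p) + (1 *: E1 p + 1 *: E2 p)); last by rewrite !scale1r.
apply: rel_gen; [asolve K; fin K | usolve; ring].
Qed.

Lemma R9 p : D3 (hD2 p) = hD2 (D3 p) + D1 p.
Proof.
rewrite (_ : hD2 (D3 p) + D1 p = hD2 (D3 p) + (1 *: D1 p + 0 *: D1 p)); last by rewrite scale0r addr0 scale1r.
apply: rel_gen; [asolve K; fin K | usolve; ring].
Qed.

Lemma R10 p : D1 (hD1 p) = hD1 (D1 p) + E1 p.
Proof.
rewrite (_ : hD1 (D1 p) + E1 p = hD1 (D1 p) + (1 *: E1 p + 0 *: E1 p)); last by rewrite scale0r addr0 scale1r.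
apply: rel_gen; [asolve K; fin K | usolve; ring].
Qed.

Lemma R11 p : E1 (hD2 p) = hD2 (E1 p) + hD2 p.
Proof.
rewrite (_ : hD2 (E1 p) + hD2 p = hD2 (E1 p) + (1 *: hD2 p + 0 *: hD2 p)); last by rewrite scale0r addr0 scale1r.
apply: rel_gen; [asolve K; fin K | usolve; ring].
Qed.

Lemma R12 p : E1 (hD3 p) = hD3 (E1 p) - hD3 p.
Proof.
rewrite (_ : hD3 (E1 p) - hD3 p = hD3 (E1 p) + ((-1) *: hD3 p + 0 *: hD3 p)); last by rewrite scale0r addr0 scaleN1r.
apply: rel_gen; [asolve K; fin K | usolve; ring].
Qed.

Lemma R13 p : E2 (hD2 p) = hD2 (E2 p) - 2%:R *: hD2 p.
Proof.
rewrite (_ : hD2 (E2 p) - 2%:R *: hD2 p = hD2 (E2 p) + ((-1) *: hD2 p + (-1) *: hD2 p)); last by rewrite scaleN1r -opprD scaler_nat mulr2n.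
apply: rel_gen; [asolve K; fin K | usolve; ring].
Qed.

Lemma R14 p : E2 (hD3 p) = hD3 (E2 p) - hD3 p.
Proof.
rewrite (_ : hD3 (E2 p) - hD3 p = hD3 (E2 p) + ((-1) *: hD3 p + 0 *: hD3 p)); last by rewrite scale0r addr0 scaleN1r.
apply: rel_gen; [asolve K; fin K | usolve; ring].
Qed.

Lemma R15 p : D1 (D2 p) = D2 (D1 p) + D3 p.
Proof.
rewrite (_ : D2 (D1 p) + D3 p = D2 (D1 p) + (1 *: D3 p + 0 *: D3 p)); last by rewrite scale0r addr0 scale1r.
apply: rel_gen; [asolve K; fin K | usolve; ring].
Qed.


End PartC.
Section OpLin.
Variables (K : fieldType) (n : nat).
Local Notation P := (KAu K n).
Lemma opZ fa fu c (p : P) : der fa fu (c *: p) = c *: der fa fu p.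
Proof. exact: derZ. Qed.
Lemma op0 fa fu : der fa fu (0 : P) = 0.
Proof. exact: (isder0 (der_isder fa fu)). Qed.
Lemma opB fa fu (p q : P) : der fa fu (p - q) = der fa fu p - der fa fu q.
Proof. exact: (isderB (der_isder fa fu)). Qed.
Lemma opD fa fu (p q : P) : der fa fu (p + q) = der fa fu p + der fa fu q.
Proof. exact: (isderD (der_isder fa fu)). Qed.

Lemma D1_0 : @D1 K n 0 = 0. Proof. exact: op0. Qed.
Lemma D1_Z c (p : P) : @D1 K n (c *: p) = c *: @D1 K n p. Proof. exact: opZ. Qed.
Lemma D1_D (p q : P) : @D1 K n (p + q) = @D1 K n p + @D1 K n q. Proof. exact: opD. Qed.
Lemma D1_B (p q : P) : @D1 K n (p - q) = @D1 K n p - @D1 K n q. Proof. exact: opB. Qed.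
Lemma D1_sum (I : Type) (r : seq I) (Q : pred I) (F : I -> P) :
  @D1 K n (\sum_(i <- r | Q i) F i) = \sum_(i <- r | Q i) @D1 K n (F i).
Proof. exact: (isder_sum (der_isder _ _)). Qed.
Lemma D1_M (p q : P) : @D1 K n (p * q) = @D1 K n p * q + p * @D1 K n q. Proof. exact: (isderM (der_isder _ _)). Qed.
Lemma D1_X k (p : P) : @D1 K n (p ^+ k) = (k%:R : K) *: (p ^+ k.-1 * @D1 K n p). Proof. exact: (isderX (der_isder _ _)). Qed.
Lemma D2_0 : @D2 K n 0 = 0. Proof. exact: op0. Qed.
Lemma D2_Z c (p : P) : @D2 K n (c *: p) = c *: @D2 K n p. Proof. exact: opZ. Qed.
Lemma D2_D (p q : P) : @D2 K n (p + q) = @D2 K n p + @D2 K n q. Proof. exact: opD. Qed.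
Lemma D2_B (p q : P) : @D2 K n (p - q) = @D2 K n p - @D2 K n q. Proof. exact: opB. Qed.
Lemma D2_sum (I : Type) (r : seq I) (Q : pred I) (F : I -> P) :
  @D2 K n (\sum_(i <- r | Q i) F i) = \sum_(i <- r | Q i) @D2 K n (F i).
Proof. exact: (isder_sum (der_isder _ _)). Qed.
Lemma D2_M (p q : P) : @D2 K n (p * q) = @D2 K n p * q + p * @D2 K n q. Proof. exact: (isderM (der_isder _ _)). Qed.
Lemma D2_X k (p : P) : @D2 K n (p ^+ k) = (k%:R : K) *: (p ^+ k.-1 * @D2 K n p). Proof. exact: (isderX (der_isder _ _)). Qed.
Lemma D3_0 : @D3 K n 0 = 0. Proof. exact: op0. Qed.
Lemma D3_Z c (p : P) : @D3 K n (c *: p) = c *: @D3 K n p. Proof. exact: opZ. Qed.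
Lemma D3_D (p q : P) : @D3 K n (p + q) = @D3 K n p + @D3 K n q. Proof. exact: opD. Qed.
Lemma D3_B (p q : P) : @D3 K n (p - q) = @D3 K n p - @D3 K n q. Proof. exact: opB. Qed.
Lemma D3_sum (I : Type) (r : seq I) (Q : pred I) (F : I -> P) :
  @D3 K n (\sum_(i <- r | Q i) F i) = \sum_(i <- r | Q i) @D3 K n (F i).
Proof. exact: (isder_sum (der_isder _ _)). Qed.
Lemma D3_M (p q : P) : @D3 K n (p * q) = @D3 K n p * q + p * @D3 K n q. Proof. exact: (isderM (der_isder _ _)). Qed.
Lemma D3_X k (p : P) : @D3 K n (p ^+ k) = (k%:R : K) *: (p ^+ k.-1 * @D3 K n p). Proof. exact: (isderX (der_isder _ _)). Qed.
Lemma hD1_0 : @hD1 K n 0 = 0. Proof. exact: op0. Qed.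
Lemma hD1_Z c (p : P) : @hD1 K n (c *: p) = c *: @hD1 K n p. Proof. exact: opZ. Qed.
Lemma hD1_D (p q : P) : @hD1 K n (p + q) = @hD1 K n p + @hD1 K n q. Proof. exact: opD. Qed.
Lemma hD1_B (p q : P) : @hD1 K n (p - q) = @hD1 K n p - @hD1 K n q. Proof. exact: opB. Qed.
Lemma hD1_sum (I : Type) (r : seq I) (Q : pred I) (F : I -> P) :
  @hD1 K n (\sum_(i <- r | Q i) F i) = \sum_(i <- r | Q i) @hD1 K n (F i).
Proof. exact: (isder_sum (der_isder _ _)). Qed.
Lemma hD1_M (p q : P) : @hD1 K n (p * q) = @hD1 K n p * q + p * @hD1 K n q. Proof. exact: (isderM (der_isder _ _)). Qed.
Lemma hD1_X k (p : P) : @hD1 K n (p ^+ k) = (k%:R : K) *: (p ^+ k.-1 * @hD1 K n p). Proof. exact: (isderX (der_isder _ _)). Qed.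
Lemma hD2_0 : @hD2 K n 0 = 0. Proof. exact: op0. Qed.
Lemma hD2_Z c (p : P) : @hD2 K n (c *: p) = c *: @hD2 K n p. Proof. exact: opZ. Qed.
Lemma hD2_D (p q : P) : @hD2 K n (p + q) = @hD2 K n p + @hD2 K n q. Proof. exact: opD. Qed.
Lemma hD2_B (p q : P) : @hD2 K n (p - q) = @hD2 K n p - @hD2 K n q. Proof. exact: opB. Qed.
Lemma hD2_sum (I : Type) (r : seq I) (Q : pred I) (F : I -> P) :
  @hD2 K n (\sum_(i <- r | Q i) F i) = \sum_(i <- r | Q i) @hD2 K n (F i).
Proof. exact: (isder_sum (der_isder _ _)). Qed.
Lemma hD2_M (p q : P) : @hD2 K n (p * q) = @hD2 K n p * q + p * @hD2 K n q. Proof. exact: (isderM (der_isder _ _)). Qed.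
Lemma hD2_X k (p : P) : @hD2 K n (p ^+ k) = (k%:R : K) *: (p ^+ k.-1 * @hD2 K n p). Proof. exact: (isderX (der_isder _ _)). Qed.
Lemma hD3_0 : @hD3 K n 0 = 0. Proof. exact: op0. Qed.
Lemma hD3_Z c (p : P) : @hD3 K n (c *: p) = c *: @hD3 K n p. Proof. exact: opZ. Qed.
Lemma hD3_D (p q : P) : @hD3 K n (p + q) = @hD3 K n p + @hD3 K n q. Proof. exact: opD. Qed.
Lemma hD3_B (p q : P) : @hD3 K n (p - q) = @hD3 K n p - @hD3 K n q. Proof. exact: opB. Qed.
Lemma hD3_sum (I : Type) (r : seq I) (Q : pred I) (F : I -> P) :
  @hD3 K n (\sum_(i <- r | Q i) F i) = \sum_(i <- r | Q i) @hD3 K n (F i).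
Proof. exact: (isder_sum (der_isder _ _)). Qed.
Lemma hD3_M (p q : P) : @hD3 K n (p * q) = @hD3 K n p * q + p * @hD3 K n q. Proof. exact: (isderM (der_isder _ _)). Qed.
Lemma hD3_X k (p : P) : @hD3 K n (p ^+ k) = (k%:R : K) *: (p ^+ k.-1 * @hD3 K n p). Proof. exact: (isderX (der_isder _ _)). Qed.
Lemma E1_0 : @E1 K n 0 = 0. Proof. exact: op0. Qed.
Lemma E1_Z c (p : P) : @E1 K n (c *: p) = c *: @E1 K n p. Proof. exact: opZ. Qed.
Lemma E1_D (p q : P) : @E1 K n (p + q) = @E1 K n p + @E1 K n q. Proof. exact: opD. Qed.
Lemma E1_B (p q : P) : @E1 K n (p - q) = @E1 K n p - @E1 K n q. Proof. exact: opB. Qed.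
Lemma E1_sum (I : Type) (r : seq I) (Q : pred I) (F : I -> P) :
  @E1 K n (\sum_(i <- r | Q i) F i) = \sum_(i <- r | Q i) @E1 K n (F i).
Proof. exact: (isder_sum (der_isder _ _)). Qed.
Lemma E1_M (p q : P) : @E1 K n (p * q) = @E1 K n p * q + p * @E1 K n q. Proof. exact: (isderM (der_isder _ _)). Qed.
Lemma E1_X k (p : P) : @E1 K n (p ^+ k) = (k%:R : K) *: (p ^+ k.-1 * @E1 K n p). Proof. exact: (isderX (der_isder _ _)). Qed.
Lemma E2_0 : @E2 K n 0 = 0. Proof. exact: op0. Qed.
Lemma E2_Z c (p : P) : @E2 K n (c *: p) = c *: @E2 K n p. Proof. exact: opZ. Qed.
Lemma E2_D (p q : P) : @E2 K n (p + q) = @E2 K n p + @E2 K n q. Proof. exact: opD. Qed.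
Lemma E2_B (p q : P) : @E2 K n (p - q) = @E2 K n p - @E2 K n q. Proof. exact: opB. Qed.
Lemma E2_sum (I : Type) (r : seq I) (Q : pred I) (F : I -> P) :
  @E2 K n (\sum_(i <- r | Q i) F i) = \sum_(i <- r | Q i) @E2 K n (F i).
Proof. exact: (isder_sum (der_isder _ _)). Qed.
Lemma E2_M (p q : P) : @E2 K n (p * q) = @E2 K n p * q + p * @E2 K n q. Proof. exact: (isderM (der_isder _ _)). Qed.
Lemma E2_X k (p : P) : @E2 K n (p ^+ k) = (k%:R : K) *: (p ^+ k.-1 * @E2 K n p). Proof. exact: (isderX (der_isder _ _)). Qed.
End OpLin.
Definition ops0 := (D1_0, D2_0, D3_0, hD1_0, hD2_0, hD3_0, E1_0, E2_0).
Definition opsZ := (D1_Z, D2_Z, D3_Z, hD1_Z, hD2_Z, hD3_Z, E1_Z, E2_Z).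
Definition opsD := (D1_D, D2_D, D3_D, hD1_D, hD2_D, hD3_D, E1_D, E2_D).
Definition opsB := (D1_B, D2_B, D3_B, hD1_B, hD2_B, hD3_B, E1_B, E2_B).
Definition opssum := (D1_sum, D2_sum, D3_sum, hD1_sum, hD2_sum, hD3_sum, E1_sum, E2_sum).
Definition opsM := (D1_M, D2_M, D3_M, hD1_M, hD2_M, hD3_M, E1_M, E2_M).
Definition opsX := (D1_X, D2_X, D3_X, hD1_X, hD2_X, hD3_X, E1_X, E2_X).

Section PartD.
Variables (K : fieldType) (n : nat) (a : KAu K n).
Local Notation P := (KAu K n).
Local Notation D1 := (@D1 K n).
Local Notation D2 := (@D2 K n).
Local Notation D3 := (@D3 K n).
Local Notation hD1 := (@hD1 K n).
Local Notation hD2 := (@hD2 K n).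
Local Notation hD3 := (@hD3 K n).
Local Notation E1 := (@E1 K n).
Local Notation E2 := (@E2 K n).

Hypothesis hD1a : hD1 a = 0.
Hypothesis D1a : D1 a = 0.
Hypothesis D2a : D2 a = 0.
Hypothesis D3a : D3 a = 0.
Variable l2 : K.
Hypothesis E2a : E2 a = l2 *: a.

Definition v i j := iter j hD2 (iter i hD3 a).

Lemma v_S2 i j : hD2 (v i j) = v i j.+1.
Proof. by rewrite /v iterS. Qed.

Lemma v_S3 i j : hD3 (v i j) = v i.+1 j.
Proof.
rewrite /v; elim: j => [|j IH] /=; first by [].
by rewrite -R1 IH.
Qed.

Lemma v00 : v 0 0 = a. Proof. by []. Qed.

Lemma E1a : E1 a = 0.
Proof. by have := R10 a; rewrite hD1a D1a ops0 /= ops0 add0r => <-. Qed.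

Lemma hD1_v0 i : hD1 (v i 0) = 0.
Proof.
elim: i => [|i IH]; first exact: hD1a.
by rewrite -v_S3 R2 IH ops0.
Qed.

Lemma hD1_v i j : hD1 (v i j) = - (j%:R) *: v i.+1 j.-1.
Proof.
elim: j => [|j IH]; first by rewrite hD1_v0 oppr0 scale0r.
rewrite -v_S2 R3 IH opsZ v_S3; case: j {IH} => [|j].
  by rewrite oppr0 scale0r sub0r scaleN1r.
rewrite -[X in _ - X]scale1r -scalerBl; congr (_ *: _).
rewrite -[j.+2]addn1 -[j.+1]addn1 !natrD; ring.
Qed.

Lemma E1_v i j : E1 (v i j) = (j%:R - i%:R) *: v i j.
Proof.
elim: j => [|j IH].
  elim: i => [|i IH]; first by rewrite v00 E1a subrr scale0r.
  rewrite -v_S3 R12 IH opsZ v_S3 -[X in _ - X]scale1r -scalerBl; congr (_ *: _).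
  rewrite -[i.+1]addn1 natrD; ring.
rewrite -v_S2 R11 IH opsZ v_S2 -[X in _ + X]scale1r -scalerDl; congr (_ *: _).
rewrite -[j.+1]addn1 natrD; ring.
Qed.

Lemma E2_v i j : E2 (v i j) = (l2 - i%:R - 2%:R * j%:R) *: v i j.
Proof.
elim: j => [|j IH].
  elim: i => [|i IH]; first by rewrite v00 E2a !subr0 mulr0 subr0.
  rewrite -v_S3 R14 IH opsZ v_S3 -[X in _ - X]scale1r -scalerBl; congr (_ *: _).
  rewrite -[i.+1]addn1 natrD; ring.
rewrite -v_S2 R13 IH opsZ v_S2 -[X in _ - X]scale1r scalerA -scalerBl; congr (_ *: _).
rewrite -[j.+1]addn1 natrD; ring.
Qed.

Lemma D1_v i j : D1 (v i j) = - (i%:R) *: v i.-1 j.+1.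
Proof.
elim: j => [|j IH].
  elim: i => [|i IH]; first by rewrite v00 D1a oppr0 scale0r.
  rewrite -v_S3 R4 IH opsZ v_S2; case: i {IH} => [|i].
    by rewrite oppr0 scale0r sub0r scaleN1r.
  rewrite v_S3 -[X in _ - X]scale1r -scalerBl; congr (_ *: _).
  rewrite -[i.+2]addn1 natrD; ring.
by rewrite -v_S2 R5 IH opsZ v_S2.
Qed.

Lemma D2_v0 i : D2 (v i 0) = 0.
Proof.
elim: i => [|i IH]; first exact: D2a.
by rewrite -v_S3 R7 IH hD1_v0 ops0 addr0.
Qed.

Lemma D2_v i j : D2 (v i j) = (j%:R * (l2 - i%:R - j%:R + 1)) *: v i j.-1.
Proof.
elim: j => [|j IH]; first by rewrite D2_v0 mul0r scale0r.
rewrite -v_S2 R6 IH opsZ E2_v; case: j {IH} => [|j].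
  rewrite mul0r scale0r add0r; congr (_ *: _); ring.
rewrite v_S2 -scalerDl; congr (_ *: _).
rewrite -[j.+2]addn1 -[j.+1]addn1 !natrD; ring.
Qed.

Lemma D3_v i j : D3 (v i j) = (i%:R * (l2 - i%:R - j%:R + 1)) *: v i.-1 j.
Proof.
elim: j => [|j IH].
  elim: i => [|i IH]; first by rewrite v00 D3a mul0r scale0r.
  rewrite -v_S3 R8 IH opsZ E1_v E2_v; case: i {IH} => [|i].
    rewrite mul0r scale0r add0r -scalerDl; congr (_ *: _); ring.
  rewrite v_S3 -!scalerDl; congr (_ *: _).
  rewrite -[i.+2]addn1 -[i.+1]addn1 !natrD; ring.
rewrite -v_S2 R9 IH opsZ v_S2 D1_v -scalerDl; congr (_ *: _).
rewrite -[j.+1]addn1 natrD; ring.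
Qed.

Lemma iterD3_v I i j : iter I D3 (v i j) =
  (\prod_(t < I) ((i - t)%:R * (l2 - (i - t)%:R - j%:R + 1))) *: v (i - I) j.
Proof.
elim: I => [|I IH]; first by rewrite big_ord0 scale1r subn0.
rewrite iterS IH opsZ D3_v scalerA big_ord_recr /= subnS.
by [].
Qed.

Lemma iterD2_v J i j : iter J D2 (v i j) =
  (\prod_(t < J) ((j - t)%:R * (l2 - i%:R - (j - t)%:R + 1))) *: v i (j - J).
Proof.
elim: J => [|J IH]; first by rewrite big_ord0 scale1r subn0.
rewrite iterS IH opsZ D2_v scalerA big_ord_recr /= subnS.
by [].
Qed.

Lemma iter_op0 (f : P -> P) k : f 0 = 0 -> iter k f 0 = 0.
Proof. by move=> f0; elim: k => [|k IH] //=; rewrite IH f0. Qed.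

Variable d : nat.
Hypothesis char0 : [pchar K] =i pred0.
Hypothesis vtop : v 0 d.+1 = 0.
Hypothesis vd : v 0 d != 0.

Lemma natr_neq0 k : (0 < k)%N -> (k%:R : K) != 0.
Proof. by move=> hk; rewrite (proj1 (pcharf0P K) char0) -lt0n. Qed.

Lemma l2E : l2 = d%:R.
Proof.
have := D2_v 0 d.+1; rewrite vtop ops0 => /esym/eqP.
rewrite scaler_eq0 (negPf vd) orbF mulf_eq0 (negPf (natr_neq0 (ltn0Sn d))) /=.
rewrite subr0 -[d.+1]addn1 natrD opprD addrA addrNK subr_eq0.
by move/eqP.
Qed.

Lemma v_top i : (i <= d.+1)%N -> v i (d.+1 - i) = 0.
Proof.
elim: i => [|i IH] hi; first by rewrite subn0.
have := hD1_v i (d.+1 - i); rewrite IH ?(ltnW hi) // ops0 => /esym/eqP.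
rewrite scaler_eq0 oppr_eq0 (negPf (natr_neq0 _)) /=; last by lia.
by rewrite -subnS => /eqP.
Qed.

Lemma v_zero i j : (d < i + j)%N -> v i j = 0.
Proof.
move=> hij; case: (leqP i d.+1) => hi.
  rewrite /v -(subnK (_ : d.+1 - i <= j)%N); last by lia.
  by rewrite iterD -/(v i (d.+1 - i)) v_top // iter_op0 // ops0.
have h0 : iter d.+1 hD3 a = 0 by have := v_top (leqnn d.+1); rewrite subnn.
rewrite /v -(subnK (ltnW hi)) iterD h0.
by rewrite iter_op0 ?ops0 // iter_op0 ?ops0.
Qed.

Local Notation u1 := (u1 K n).
Local Notation u2 := (u2 K n).
Local Notation u3 := (u3 K n).

Lemma D1_u1 : D1 u1 = 0.
Proof. by rewrite /Defs.D1 /Defs.u1 derU. Qed.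
Lemma D1_u2 : D1 u2 = u1.
Proof. by rewrite /Defs.D1 /Defs.u2 derU. Qed.
Lemma D1_u3 : D1 u3 = 0.
Proof. by rewrite /Defs.D1 /Defs.u3 derU. Qed.
Lemma D2_u1 : D2 u1 = 0.
Proof. by rewrite /Defs.D2 /Defs.u1 derU. Qed.
Lemma D2_u2 : D2 u2 = 0.
Proof. by rewrite /Defs.D2 /Defs.u2 derU. Qed.
Lemma D2_u3 : D2 u3 = u2.
Proof. by rewrite /Defs.D2 /Defs.u3 derU. Qed.
Lemma hD1_u1 : hD1 u1 = u2.
Proof. by rewrite /Defs.hD1 /Defs.u1 derU. Qed.
Lemma hD1_u2 : hD1 u2 = 0.
Proof. by rewrite /Defs.hD1 /Defs.u2 derU. Qed.
Lemma hD1_u3 : hD1 u3 = 0.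
Proof. by rewrite /Defs.hD1 /Defs.u3 derU. Qed.
Lemma hD2_u1 : hD2 u1 = 0.
Proof. by rewrite /Defs.hD2 /Defs.u1 derU. Qed.
Lemma hD2_u2 : hD2 u2 = u3.
Proof. by rewrite /Defs.hD2 /Defs.u2 derU. Qed.
Lemma hD2_u3 : hD2 u3 = 0.
Proof. by rewrite /Defs.hD2 /Defs.u3 derU. Qed.
Definition uvals := (D1_u1, D1_u2, D1_u3, D2_u1, D2_u2, D2_u3, hD1_u1, hD1_u2, hD1_u3, hD2_u1, hD2_u2, hD2_u3).

Implicit Types F G : nat -> nat -> P.

Definition S (F : nat -> nat -> P) := \sum_(0 <= i < d.+1) \sum_(0 <= j < d.+1 - i) F i j.
Definition S' (F : nat -> nat -> P) := \sum_(0 <= i < d) \sum_(0 <= j < d - i) F i j.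

Lemma S_split F G : S (fun i j => F i j + G i j) = S F + S G.
Proof. by rewrite /S -big_split; apply: eq_bigr => i _; rewrite big_split. Qed.

Lemma S'_split F G : S' (fun i j => F i j + G i j) = S' F + S' G.
Proof. by rewrite /S' -big_split; apply: eq_bigr => i _; rewrite big_split. Qed.

Lemma S'_0 F : (forall i j, (i + j < d)%N -> F i j = 0) -> S' F = 0.
Proof.
move=> hF; rewrite /S' big1_seq // => i; rewrite mem_index_iota => /andP[_ hi].
rewrite big1_seq // => j; rewrite mem_index_iota => /andP[_ hj].
by apply: hF; lia.
Qed.

Lemma shift_i F : (forall j, F 0 j = 0) -> S F = S' (fun i j => F i.+1 j).
Proof.
move=> h0; rewrite /S /S' big_nat_recl // big1_seq ?add0r //.
all: try by move=> j _; rewrite h0.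
Qed.

Lemma shift_j F : (forall i, F i 0 = 0) -> S F = S' (fun i j => F i j.+1).
Proof.
move=> h0; rewrite /S /S' big_nat_recr //= subSnn big_nat1 h0 addr0.
rewrite big_seq_cond [RHS]big_seq_cond; apply: eq_bigr => i.
rewrite mem_index_iota andbT => /andP[_ hi].
by rewrite subSn ?(ltnW hi) // big_nat_recl // h0 add0r.
Qed.

Lemma drop_j F : (forall i, (i <= d)%N -> F i (d - i)%N = 0) -> S F = S' F.
Proof.
move=> h0; have hd := h0 d (leqnn d); rewrite subnn in hd.
rewrite /S /S' big_nat_recr //= subSnn big_nat1 hd addr0.
rewrite big_seq_cond [RHS]big_seq_cond; apply: eq_bigr => i.
rewrite mem_index_iota andbT => /andP[_ hi].
by rewrite subSn ?(ltnW hi) // big_nat_recr //= h0 ?addr0 // ltnW.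
Qed.

Definition cf i j : K := (-1) ^+ (i + j) / (i`! * j`!)%:R.
Definition m i j : P := u3 ^+ (d - (i + j)) * u1 ^+ i * u2 ^+ j.

Lemma fact_neq0 k : (k`!%:R : K) != 0.
Proof. by rewrite natr_neq0 // fact_gt0. Qed.

Lemma cf_j i j : cf i j.+1 * j.+1%:R = - cf i j.
Proof.
rewrite /cf addnS exprS factS !natrM.
have h1 := fact_neq0 i; have h2 := fact_neq0 j; have h3 := natr_neq0 (ltn0Sn j).
set X := (-1) ^+ (i + j); set A := (i`!%:R : K); set B := (j.+1%:R : K); set C := (j`!%:R : K).
rewrite !invfM.
transitivity (- (X * (A^-1 * C^-1)) * (B^-1 * B)); first by ring.
by rewrite mulVf // mulr1.
Qed.

Lemma cf_i i j : cf i.+1 j * i.+1%:R = - cf i j.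
Proof.
rewrite /cf addSn exprS factS !natrM.
have h1 := fact_neq0 i; have h2 := fact_neq0 j; have h3 := natr_neq0 (ltn0Sn i).
set X := (-1) ^+ (i + j); set A := (j`!%:R : K); set B := (i.+1%:R : K); set C := (i`!%:R : K).
rewrite !invfM.
transitivity (- (X * (C^-1 * A^-1)) * (B^-1 * B)); first by ring.
by rewrite mulVf // mulr1.
Qed.

Lemma casE : casimir a d = S (fun i j => cf i j *: (v i j * m i j)).
Proof.
rewrite /casimir /S big_mkord; apply: eq_bigr => i _.
rewrite big_mkord (@big_ord_widen _ _ _ (d.+1 - i) d.+1 (fun j => cf i j *: (v i j * m i j)) (leq_subr _ _)).
apply: eq_big => [j|j _]; first by apply/idP/idP; lia.
by rewrite /m /cf /v !mulrA.
Qed.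

Lemma D1_m0 i : D1 (m i 0) = 0.
Proof. by rewrite /m !opsM !opsX !uvals !(mulr0, scaler0, mul0r, add0r, addr0, scale0r). Qed.

Lemma D1_m i j : D1 (m i j.+1) = j.+1%:R *: m i.+1 j.
Proof.
rewrite /m !opsM !opsX !uvals !(mulr0, scaler0, mul0r, add0r, addr0, scale0r).
rewrite addnS addSn -scalerAr; congr (_ *: _); rewrite /= exprS; set U := u3 ^+ _; ring.
Qed.

Lemma hD1_m0 j : hD1 (m 0 j) = 0.
Proof. by rewrite /m !opsM !opsX !uvals !(mulr0, scaler0, mul0r, add0r, addr0, scale0r). Qed.

Lemma hD1_m i j : hD1 (m i.+1 j) = i.+1%:R *: m i j.+1.
Proof.
rewrite /m !opsM !opsX !uvals !(mulr0, scaler0, mul0r, add0r, addr0, scale0r).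
rewrite addnS addSn -?scalerAr -?scalerAl -?scalerAr; congr (_ *: _); rewrite /= exprS; set U := u3 ^+ _; ring.
Qed.

Lemma D2_m i j : D2 (m i j) = (d - (i + j))%:R *: m i j.+1.
Proof.
rewrite /m !opsM !opsX !uvals !(mulr0, scaler0, mul0r, add0r, addr0, scale0r).
case E: (d - (i + j))%N => [|e]; first by rewrite -!scalerAl !scale0r.
have -> : (d - (i + j.+1))%N = e by lia.
rewrite -?scalerAr -?scalerAl -?scalerAr; congr (_ *: _); rewrite /= exprS; set U := u3 ^+ _; ring.
Qed.

Lemma hD2_m0 i : hD2 (m i 0) = 0.
Proof. by rewrite /m !opsM !opsX !uvals !(mulr0, scaler0, mul0r, add0r, addr0, scale0r). Qed.

Lemma hD2_m i j : (i + j < d)%N -> hD2 (m i j.+1) = j.+1%:R *: m i j.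
Proof.
move=> hij.
rewrite /m !opsM !opsX !uvals !(mulr0, scaler0, mul0r, add0r, addr0, scale0r).
have -> : (d - (i + j))%N = (d - (i + j.+1)).+1 by lia.
rewrite -scalerAr; congr (_ *: _); rewrite /= exprS; set U := u3 ^+ _; ring.
Qed.

Lemma S_ext F G : (forall i j, F i j = G i j) -> S F = S G.
Proof. by move=> h; apply: eq_bigr => i _; apply: eq_bigr => j _. Qed.

Lemma S'_ext F G : (forall i j, (i + j < d)%N -> F i j = G i j) -> S' F = S' G.
Proof.
move=> h; rewrite /S' big_seq_cond [RHS]big_seq_cond; apply: eq_bigr => i.
rewrite mem_index_iota andbT => /andP[_ hi].
rewrite big_seq_cond [RHS]big_seq_cond; apply: eq_bigr => j.
by rewrite mem_index_iota andbT => /andP[_ hj]; apply: h; lia.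
Qed.

Lemma S_map (f : P -> P) F :
  (forall (r : seq nat) (H : nat -> P), f (\sum_(i <- r) H i) = \sum_(i <- r) f (H i)) ->
  f (S F) = S (fun i j => f (F i j)).
Proof. by move=> h; rewrite /S h; apply: eq_bigr => i _; rewrite h. Qed.

Lemma term_op (f : P -> P) :
  (forall (r : seq nat) (H : nat -> P), f (\sum_(i <- r) H i) = \sum_(i <- r) f (H i)) ->
  (forall c p, f (c *: p) = c *: f p) -> (forall p q, f (p * q) = f p * q + p * f q) ->
  f (S (fun i j => cf i j *: (v i j * m i j))) =
  S (fun i j => cf i j *: (f (v i j) * m i j)) + S (fun i j => cf i j *: (v i j * f (m i j))).
Proof.
move=> hs hz hm; rewrite S_map // -S_split; apply: S_ext => i j.
by rewrite hz hm scalerDr.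
Qed.

Lemma D1_cas : D1 (casimir a d) = 0.
Proof.
rewrite casE (@term_op D1 (fun r H => D1_sum r _ H) (D1_Z (n:=n)) (D1_M (n:=n))).
rewrite shift_i; last by move=> j; rewrite D1_v oppr0 scale0r mul0r scaler0.
rewrite shift_j; last by move=> i; rewrite D1_m0 mulr0 scaler0.
rewrite -S'_split; apply: S'_0 => i j hij.
rewrite D1_v D1_m /= -scalerAl -scalerAr !scalerA -scalerDl.
by rewrite mulrN cf_i cf_j opprK addrN scale0r.
Qed.

Lemma scal0 (c : K) (x : P) : c = 0 -> c *: x = 0.
Proof. by move=> ->; rewrite scale0r. Qed.

Lemma hD1_cas : hD1 (casimir a d) = 0.
Proof.
rewrite casE (@term_op hD1 (fun r H => hD1_sum r _ H) (hD1_Z (n:=n)) (hD1_M (n:=n))).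
rewrite shift_j; last by move=> i; rewrite hD1_v oppr0 scale0r mul0r scaler0.
rewrite shift_i; last by move=> j; rewrite hD1_m0 mulr0 scaler0.
rewrite -S'_split; apply: S'_0 => i j hij.
rewrite hD1_v hD1_m /= -scalerAl -scalerAr !scalerA -scalerDl.
by rewrite mulrN cf_j cf_i opprK addrN scale0r.
Qed.

Lemma D2_cas : D2 (casimir a d) = 0.
Proof.
rewrite casE (@term_op D2 (fun r H => D2_sum r _ H) (D2_Z (n:=n)) (D2_M (n:=n))).
rewrite shift_j; last by move=> i; rewrite D2_v mul0r scale0r mul0r scaler0.
rewrite (drop_j (F := fun i j => cf i j *: (v i j * D2 (m i j)))); last first.
  by move=> i hi; rewrite D2_m subnKC // subnn mulr0n scale0r mulr0 scaler0.
rewrite -S'_split; apply: S'_0 => i j hij.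
rewrite D2_v D2_m /= -scalerAl -scalerAr !scalerA -scalerDl l2E.
apply: scal0; rewrite mulrA cf_j natrB; last by lia.
rewrite natrD -addn1 natrD; ring.
Qed.

Lemma hD2_cas : hD2 (casimir a d) = 0.
Proof.
rewrite casE (@term_op hD2 (fun r H => hD2_sum r _ H) (hD2_Z (n:=n)) (hD2_M (n:=n))).
rewrite (drop_j (F := fun i j => cf i j *: (hD2 (v i j) * m i j))); last first.
  by move=> i hi; rewrite v_S2 v_zero ?mul0r ?scaler0 //; lia.
rewrite shift_j; last by move=> i; rewrite hD2_m0 mulr0 scaler0.
rewrite -S'_split; apply: S'_0 => i j hij.
by rewrite v_S2 hD2_m // -scalerAr !scalerA -scalerDl cf_j addrN scale0r.
Qed.

Lemma D3_cas : D3 (casimir a d) = 0.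
Proof. by have := R15 (casimir a d); rewrite D2_cas D1_cas !ops0 add0r => <-. Qed.
Lemma hD3_cas : hD3 (casimir a d) = 0.
Proof.
have := R3 (casimir a d); rewrite hD2_cas hD1_cas !ops0 sub0r => /eqP.
by rewrite eq_sym oppr_eq0 => /eqP.
Qed.
Lemma E1_cas : E1 (casimir a d) = 0.
Proof. by have := R10 (casimir a d); rewrite hD1_cas D1_cas !ops0 add0r => <-. Qed.
Lemma E2_cas : E2 (casimir a d) = 0.
Proof. by have := R6 (casimir a d); rewrite hD2_cas D2_cas !ops0 add0r => <-. Qed.

Implicit Types (p q : P) (fa : nat -> nat -> P) (fu : 'I_3 -> P).
Definition sok (Q : 'X_{1..nv n} -> Prop) (p : P) := forall mm, mm \in msupp p -> Q mm.

Lemma sok0 Q : sok Q 0.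
Proof. by move=> mm; rewrite msupp0. Qed.
Lemma sokD Q p q : sok Q p -> sok Q q -> sok Q (p + q).
Proof. by move=> hp hq mm /msuppD_le; rewrite mem_cat => /orP[/hp|/hq]. Qed.
Lemma sokZ Q c p : sok Q p -> sok Q (c *: p).
Proof. by move=> hp mm /msuppZ_le /hp. Qed.
Lemma sok_sum Q (I : Type) (r : seq I) (R : pred I) (F : I -> P) :
  (forall i, R i -> sok Q (F i)) -> sok Q (\sum_(i <- r | R i) F i).
Proof. by move=> h; elim/big_ind: _ => //; [exact: sok0 | exact: sokD]. Qed.

Definition noU (mm : 'X_{1..nv n}) := forall k : 'I_3, mm (uvar n k) = 0%N.

Lemma inKA_sok p : inKA p <-> sok noU p.
Proof. by []. Qed.

Lemma avar_uvar (q : AIdx n) k : (avar q == uvar n k) = false.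
Proof.
apply/negbTE; rewrite -val_eqE /avar /uvar /=.
rewrite neq_ltn; apply/orP; left; exact: (leq_trans (ltn_ord (enum_rank q)) (leq_addr _ _)).
Qed.

Lemma uvar_eq k k' : (uvar n k == uvar n k') = (k == k').
Proof. by rewrite -!val_eqE /uvar /= eqn_add2l. Qed.

Lemma inKA_mul p q : inKA p -> inKA q -> inKA (p * q).
Proof.
move=> hp hq mm /msuppM_le /allpairsP [[m1 m2] /= [h1 h2 ->]] k.
by rewrite mnmDE hp // hq.
Qed.

Lemma inKA_aX i j : inKA (aX K n i j).
Proof.
case: (boolP (i + j <= n)%N) => hij; last by rewrite aX_out //; exact: sok0.
have [q [-> _]] := aX_in K hij.
by move=> mm; rewrite msuppX mem_seq1 => /eqP -> k; rewrite mnm1E avar_uvar.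
Qed.

Lemma inKA_mderiv k p : inKA p -> inKA (mderiv k p).
Proof.
move=> hp mm; rewrite mcoeff_msupp mcoeff_mderiv => hm s.
have : (mm + U_(k))%MM \in msupp p.
  by rewrite mcoeff_msupp; apply: contraNN hm => /eqP ->; rewrite mul0rn.
by move/hp/(_ s); rewrite mnmDE; lia.
Qed.

Lemma mderiv_u0 s p : inKA p -> mderiv (uvar n s) p = 0.
Proof.
move=> hp; apply/mpolyP => mm; rewrite mcoeff_mderiv mcoeff0.
have : (mm + U_(uvar n s))%MM \notin msupp p.
  apply/negP => /hp /(_ s); rewrite mnmDE mnm1E eqxx; lia.
by rewrite -mcoeff_eq0 => /eqP ->; rewrite mul0rn.
Qed.

Lemma inKA_der fa fu p : (forall i j, inKA (fa i j)) -> inKA p -> inKA (der fa fu p).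
Proof.
move=> hf hp; rewrite /der; apply: sok_sum => k _.
case: (gen_cases k) => [[q ->]|[s ->]].
  by rewrite gen_avar; apply: inKA_mul => //; exact: inKA_mderiv.
by rewrite mderiv_u0 // mulr0; exact: sok0.
Qed.

Lemma inKA_sc c i j : inKA (sc c (aX K n i j)).
Proof. by apply: sokZ; exact: inKA_aX. Qed.

Lemma inKA_v i j : inKA a -> inKA (v i j).
Proof.
move=> ha; rewrite /v; elim: j => [|j IH] /=.
  by elim: i => [|i IH] //=; apply: inKA_der => // *; exact: inKA_sc.
by apply: inKA_der => // *; exact: inKA_sc.
Qed.

Lemma m_X i j : m i j = 'X_[U_(uvar n (2%R : 'I_3)) *+ (d - (i + j)) + U_(uvar n (0%R : 'I_3)) *+ i + U_(uvar n (1%R : 'I_3)) *+ j].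
Proof. by rewrite /m /Defs.u1 /Defs.u2 /Defs.u3 /uX !mpolyXD !mpolyXn. Qed.

Lemma homog_vm q i j : inKA q -> (i + j <= d)%N -> homogU d (q * m i j).
Proof.
move=> hq hij mm; rewrite m_X (perm_mem (msuppMX _ _)) => /mapP [x hx ->].
rewrite (eq_bigr (fun k : 'I_3 => (U_(uvar n (2%R : 'I_3)) *+ (d - (i + j)) + U_(uvar n (0%R : 'I_3)) *+ i
   + U_(uvar n (1%R : 'I_3)) *+ j)%MM (uvar n k))); last by move=> k _; rewrite mnmDE (hq x hx k) addn0.
rewrite !big_ord_recr big_ord0 /= !mnmDE !mulmnE !mnm1E !uvar_eq /=.
lia.
Qed.

Lemma homog_cas : inKA a -> homogU d (casimir a d).
Proof.
move=> ha; change (sok (fun mm => (\sum_(k < 3) mm (uvar n k))%N = d) (casimir a d)).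
rewrite casE /S big_seq; apply: sok_sum => i; rewrite mem_index_iota => /andP[_ hi].
rewrite big_seq; apply: sok_sum => j; rewrite mem_index_iota => /andP[_ hj].
apply: sokZ; apply: homog_vm; [exact: inKA_v | lia].
Qed.

Definition Cb (p : P) := exists c : nat -> nat -> K,
  p = \sum_(i < d.+1) \sum_(j < d.+1) c i j *: v i j.

Definition scc i j : K := (-1) ^+ (i + j) / (d ^_ (i + j))%:R.

Lemma scc_neq0 i j : (i + j <= d)%N -> scc i j != 0.
Proof.
move=> hij; rewrite /scc mulf_neq0 ?invr_eq0 ?natr_neq0 ?ffact_gt0 //.
by rewrite expf_neq0 // oppr_eq0 oner_eq0.
Qed.

Lemma Cbar_Cb p : Cbar a d p <-> Cb p.
Proof.
split=> [[c ->]|[c ->]].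
  exists (fun i j => if (i + j <= d)%N then c i j * scc i j else 0).
  apply: eq_bigr => i _; rewrite big_mkcond; apply: eq_bigr => j _ /=.
  by case: ifP => _; rewrite ?scale0r // scalerA.
exists (fun i j => c i j / scc i j).
apply: eq_bigr => i _; rewrite [RHS]big_mkcond; apply: eq_bigr => j _ /=.
case: ifP => hij.
  by rewrite scalerA -mulrA mulVf ?mulr1 ?scc_neq0.
by rewrite v_zero ?scaler0 //; lia.
Qed.

Lemma Cb0 : Cb 0.
Proof. by exists (fun _ _ => 0); rewrite big1 // => i _; rewrite big1 // => j _; rewrite scale0r. Qed.

Lemma CbD p q : Cb p -> Cb q -> Cb (p + q).
Proof.
move=> [c ->] [c' ->]; exists (fun i j => c i j + c' i j).
rewrite -big_split; apply: eq_bigr => i _; rewrite -big_split; apply: eq_bigr => j _.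
by rewrite scalerDl.
Qed.

Lemma CbZ k p : Cb p -> Cb (k *: p).
Proof.
move=> [c ->]; exists (fun i j => k * c i j).
rewrite scaler_sumr; apply: eq_bigr => i _; rewrite scaler_sumr; apply: eq_bigr => j _.
by rewrite scalerA.
Qed.

Lemma Cb_sum (I : Type) (r : seq I) (R : pred I) (F : I -> P) :
  (forall i, R i -> Cb (F i)) -> Cb (\sum_(i <- r | R i) F i).
Proof. by move=> h; elim/big_ind: _ => //; [exact: Cb0 | exact: CbD]. Qed.

Lemma sum_ind_ord N (F : nat -> P) i : (i < N)%N ->
  \sum_(i' < N) (i' == i :> nat)%:R *: F i' = F i.
Proof.
move=> hi; rewrite (bigD1 (Ordinal hi)) //= eqxx scale1r big1 ?addr0 // => k hk.
have -> : (k == i :> nat) = false by apply/negbTE; apply: contra hk => /eqP e; apply/eqP/val_inj.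
by rewrite scale0r.
Qed.

Lemma Cb_v i j : Cb (v i j).
Proof.
case: (leqP (i + j) d) => hij; last by rewrite v_zero //; exact: Cb0.
exists (fun i' j' => (i' == i)%:R * (j' == j)%:R).
have hi : (i < d.+1)%N by lia.
have hj : (j < d.+1)%N by lia.
rewrite -(sum_ind_ord (fun j' => v i j') hj).
rewrite -(sum_ind_ord (fun i' => \sum_(j' < d.+1) (j' == j :> nat)%:R *: v i' j') hi).
apply: eq_bigr => i' _; rewrite scaler_sumr; apply: eq_bigr => j' _; rewrite scalerA.
by [].
Qed.

Lemma Cb_op (f : P -> P) :
  (forall (I : Type) (r : seq I) (Q : pred I) (H : I -> P),
     f (\sum_(i <- r | Q i) H i) = \sum_(i <- r | Q i) f (H i)) ->
  (forall (c : K) p, f (c *: p) = c *: f p) ->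
  (forall i j, Cb (f (v i j))) -> forall p, Cb p -> Cb (f p).
Proof.
move=> hs hz hv p [c ->]; rewrite hs; apply: Cb_sum => i _.
rewrite hs; apply: Cb_sum => j _; rewrite hz; apply: CbZ; exact: hv.
Qed.

Lemma Cb_stable : sl3_stable Cb.
Proof.
move=> p hp; split; [|split; [|split; [|split; [|split; [|split; [|split]]]]]].
- apply: (Cb_op (@D1_sum _ _) (@D1_Z _ _)) hp => i j; rewrite D1_v; apply: CbZ; exact: Cb_v.
- apply: (Cb_op (@D2_sum _ _) (@D2_Z _ _)) hp => i j; rewrite D2_v; apply: CbZ; exact: Cb_v.
- apply: (Cb_op (@D3_sum _ _) (@D3_Z _ _)) hp => i j; rewrite D3_v; apply: CbZ; exact: Cb_v.
- apply: (Cb_op (@hD1_sum _ _) (@hD1_Z _ _)) hp => i j; rewrite hD1_v; apply: CbZ; exact: Cb_v.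
- apply: (Cb_op (@hD2_sum _ _) (@hD2_Z _ _)) hp => i j; rewrite v_S2; exact: Cb_v.
- apply: (Cb_op (@hD3_sum _ _) (@hD3_Z _ _)) hp => i j; rewrite v_S3; exact: Cb_v.
- apply: (Cb_op (@E1_sum _ _) (@E1_Z _ _)) hp => i j; rewrite E1_v; apply: CbZ; exact: Cb_v.
- apply: (Cb_op (@E2_sum _ _) (@E2_Z _ _)) hp => i j; rewrite E2_v; apply: CbZ; exact: Cb_v.
Qed.

Definition sl : seq P := [seq v (nat_of_ord x.1) (nat_of_ord x.2) | x : 'I_d.+1 * 'I_d.+1 <- enum {: 'I_d.+1 * 'I_d.+1}].

Lemma span0 : Defs.span sl 0.
Proof. by exists (fun _ => 0); rewrite big1 // => k _; rewrite scale0r. Qed.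
Lemma spanD p q : Defs.span sl p -> Defs.span sl q -> Defs.span sl (p + q).
Proof.
move=> [c ->] [c' ->]; exists (fun k => c k + c' k).
by rewrite -big_split; apply: eq_bigr => k _; rewrite scalerDl.
Qed.
Lemma spanZ k p : Defs.span sl p -> Defs.span sl (k *: p).
Proof.
move=> [c ->]; exists (fun i => k * c i).
by rewrite scaler_sumr; apply: eq_bigr => i _; rewrite scalerA.
Qed.
Lemma span_sum (I : Type) (r : seq I) (R : pred I) (F : I -> P) :
  (forall i, R i -> Defs.span sl (F i)) -> Defs.span sl (\sum_(i <- r | R i) F i).
Proof. by move=> h; elim/big_ind: _ => //; [exact: span0 | exact: spanD]. Qed.

Lemma span_nth k : (k < size sl)%N -> Defs.span sl sl`_k.
Proof.
move=> hk; exists (fun k' : 'I_(size sl) => (k' == k :> nat)%:R).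
by rewrite (sum_ind_ord (fun k' => sl`_k') hk).
Qed.

Lemma span_v i j : (i < d.+1)%N -> (j < d.+1)%N -> Defs.span sl (v i j).
Proof.
move=> hi hj; set x := (Ordinal hi, Ordinal hj).
have hx : x \in enum {: 'I_d.+1 * 'I_d.+1} by rewrite mem_enum.
have hk : (index x (enum {: 'I_d.+1 * 'I_d.+1}) < size sl)%N by rewrite size_map index_mem.
by have := span_nth hk; rewrite (nth_map x) ?nth_index ?index_mem.
Qed.

Lemma Cb_span p : Cb p <-> Defs.span sl p.
Proof.
split=> [[c ->]|[c ->]].
  apply: span_sum => i _; apply: span_sum => j _; apply: spanZ; exact: span_v.
apply: Cb_sum => k _; apply: CbZ.
rewrite (nth_map (ord0, ord0)); first exact: Cb_v.
by move: (nat_of_ord k) (ltn_ord k) => k' hk'; rewrite /sl size_map in hk'.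
Qed.

Lemma iter_sum (f : P -> P) k :
  (forall (I : Type) (r : seq I) (Q : pred I) (H : I -> P),
     f (\sum_(i <- r | Q i) H i) = \sum_(i <- r | Q i) f (H i)) ->
  forall (I : Type) (r : seq I) (Q : pred I) (H : I -> P),
     iter k f (\sum_(i <- r | Q i) H i) = \sum_(i <- r | Q i) iter k f (H i).
Proof.
move=> hs I r Q H; elim: k => [|k IH] //=.
by rewrite IH hs.
Qed.

Lemma iter_Z (f : P -> P) k : (forall (c : K) p, f (c *: p) = c *: f p) ->
  forall c p, iter k f (c *: p) = c *: iter k f p.
Proof. by move=> hz c p; elim: k => [|k IH] //=; rewrite IH hz. Qed.

Lemma a_neq0 : a != 0.
Proof.
apply: contraNN vd => /eqP a0; apply/eqP.
by rewrite /v /= a0 iter_op0 // hD2_0.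
Qed.

Lemma nz_lin x y : (x + y <= d)%N -> (l2 - x%:R - y%:R + 1 : K) != 0.
Proof.
move=> hxy; suff -> : (l2 - x%:R - y%:R + 1 : K) = (d.+1 - x - y)%:R by apply: natr_neq0; lia.
have e : (d + 1 = (d.+1 - x - y) + x + y)%N by lia.
move: (congr1 (fun z => z%:R : K) e); rewrite !natrD => h.
rewrite l2E; transitivity (d%:R + 1 - x%:R - y%:R : K); first by ring.
by rewrite h; ring.
Qed.

Lemma prod0 N (F : nat -> K) t0 : (t0 < N)%N -> F t0 = 0 -> \prod_(t < N) F t = 0.
Proof. by move=> ht h0; rewrite (bigD1 (Ordinal ht)) //= h0 mul0r. Qed.

Section Irr.
Variable W : P -> Prop.
Hypothesis hW : sl3_submodule W.

Lemma W0 : W 0. Proof. by case: hW => [[]]. Qed.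
Lemma WD p q : W p -> W q -> W (p + q). Proof. by case: hW => [[_ [h _]] _]; apply: h. Qed.
Lemma WZ c p : W p -> W (c *: p). Proof. by case: hW => [[_ [_ h]] _]; apply: h. Qed.
Lemma W_sum (I : Type) (r : seq I) (R : pred I) (F : I -> P) :
  (forall i, R i -> W (F i)) -> W (\sum_(i <- r | R i) F i).
Proof. by move=> h; elim/big_ind: _ => //; [exact: W0 | exact: WD]. Qed.

Lemma W_iter (f : P -> P) : (forall p, W p -> W (f p)) -> forall k p, W p -> W (iter k f p).
Proof. by move=> hf k p hp; elim: k => [|k IH] //=; apply: hf. Qed.

Lemma WD2 p : W p -> W (D2 p). Proof. by case: hW => _ /(_ p) h /h [_ []]. Qed.
Lemma WD3 p : W p -> W (D3 p). Proof. by case: hW => _ /(_ p) h /h [_ [_ []]]. Qed.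
Lemma WhD2 p : W p -> W (hD2 p). Proof. by case: hW => _ /(_ p) h /h [_ [_ [_ [_ []]]]]. Qed.
Lemma WhD3 p : W p -> W (hD3 p). Proof. by case: hW => _ /(_ p) h /h [_ [_ [_ [_ [_ []]]]]]. Qed.

Lemma W_all : W a -> forall p, Cbar a d p -> W p.
Proof.
move=> Wa p /Cbar_Cb [c ->]; apply: W_sum => i _; apply: W_sum => j _; apply: WZ.
by rewrite /v; apply: (W_iter WhD2); apply: (W_iter WhD3).
Qed.

Lemma W_a w : (forall p, W p -> Cbar a d p) -> W w -> w != 0 -> W a.
Proof.
move=> hsub Ww wn0.
have [c0 hc0] := proj1 (Cbar_Cb w) (hsub w Ww).
pose c i j := if (i + j <= d)%N then c0 i j else 0.
have hc : w = \sum_(i < d.+1) \sum_(j < d.+1) c i j *: v i j.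
  rewrite hc0; apply: eq_bigr => i _; apply: eq_bigr => j _; rewrite /c.
  by case: ifP => h //; rewrite v_zero ?scaler0 //; lia.
have [x hx] : exists x : 'I_d.+1 * 'I_d.+1, c x.1 x.2 != 0.
  case: (boolP [exists x : 'I_d.+1 * 'I_d.+1, c x.1 x.2 != 0]) => [/existsP //|/existsPn h].
  move: wn0; rewrite hc big1 ?eqxx // => i _; rewrite big1 // => j _.
  by have := h (i, j); rewrite negbK => /eqP ->; rewrite scale0r.
case: (@arg_maxnP _ x (fun y : 'I_d.+1 * 'I_d.+1 => c y.1 y.2 != 0) (fun y => (y.1 + y.2)%N) hx).
move=> [I J] /= hIJ hmax.
have hIJd : (I + J <= d)%N by move: hIJ; rewrite /c; case: ifP => //; rewrite eqxx.
pose k3 := \prod_(t < I) ((I - t)%:R * (l2 - (I - t)%:R - J%:R + 1)).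
pose k2 := \prod_(t < J) ((J - t)%:R * (l2 - (I - I)%:R - (J - t)%:R + 1)).
pose Y := (c I J * (k3 * k2)) *: a.
have key : iter J D2 (iter I D3 w) = Y.
  transitivity (\sum_(i < d.+1) (i == I :> nat)%:R *: \sum_(j < d.+1) (j == J :> nat)%:R *: Y); last first.
    under eq_bigr => i _ do rewrite (sum_ind_ord (fun _ => Y) (ltn_ord J)).
    exact: (sum_ind_ord (fun _ => Y) (ltn_ord I)).
  rewrite hc (iter_sum _ (@D3_sum _ _)) (iter_sum _ (@D2_sum _ _)); apply: eq_bigr => i _.
  rewrite (iter_sum _ (@D3_sum _ _)) (iter_sum _ (@D2_sum _ _)) scaler_sumr; apply: eq_bigr => j _.
  rewrite (iter_Z _ (@D3_Z _ _)) (iter_Z _ (@D2_Z _ _)) iterD3_v (iter_Z _ (@D2_Z _ _)) iterD2_v.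
  case: (eqVneq (i : nat) I) => [ei|nei]; case: (eqVneq (j : nat) J) => [ej|nej].
  - rewrite /Y ei ej !subnn !scale1r !scalerA.
    by rewrite /k3 /k2 subnn mulrA.
  - rewrite scale0r scaler0.
    case: (boolP (c i j == 0)) => [/eqP -> | cn0]; first by rewrite scale0r.
    have := hmax (i, j) cn0; rewrite /= => hle.
    case: (ltnP j J) => hj; last by exfalso; move/eqP: nej; lia.
    have z2 : \prod_(t < J) ((j - t)%:R * (l2 - (i - I)%:R - (j - t)%:R + 1) : K) = 0.
      by apply: (@prod0 J (fun t => (j - t)%:R * (l2 - (i - I)%:R - (j - t)%:R + 1)) j) => //; rewrite subnn mul0r.
    by rewrite z2 scale0r !scaler0.
  - rewrite scale0r.
    case: (boolP (c i j == 0)) => [/eqP -> | cn0]; first by rewrite scale0r.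
    have := hmax (i, j) cn0; rewrite /= => hle.
    case: (ltnP i I) => hi; last by exfalso; move/eqP: nei; lia.
    have z3 : \prod_(t < I) ((i - t)%:R * (l2 - (i - t)%:R - j%:R + 1) : K) = 0.
      by apply: (@prod0 I (fun t => (i - t)%:R * (l2 - (i - t)%:R - j%:R + 1)) i) => //; rewrite subnn mul0r.
    by rewrite z3 scale0r scaler0.
  - rewrite scale0r.
    case: (boolP (c i j == 0)) => [/eqP -> | cn0]; first by rewrite scale0r.
    have := hmax (i, j) cn0; rewrite /= => hle.
    case: (ltnP i I) => hi.
      have z3 : \prod_(t < I) ((i - t)%:R * (l2 - (i - t)%:R - j%:R + 1) : K) = 0.
        by apply: (@prod0 I (fun t => (i - t)%:R * (l2 - (i - t)%:R - j%:R + 1)) i) => //; rewrite subnn mul0r.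
      by rewrite z3 scale0r scaler0.
    case: (ltnP j J) => hj; last by exfalso; move/eqP: nei; lia.
    have z2 : \prod_(t < J) ((j - t)%:R * (l2 - (i - I)%:R - (j - t)%:R + 1) : K) = 0.
      by apply: (@prod0 J (fun t => (j - t)%:R * (l2 - (i - I)%:R - (j - t)%:R + 1)) j) => //; rewrite subnn mul0r.
    by rewrite z2 scale0r !scaler0.
have hs : c I J * (k3 * k2) != 0.
  rewrite !mulf_neq0 //.
    apply/prodf_neq0 => t _; have := ltn_ord t => ht.
    by rewrite mulf_neq0 ?natr_neq0 ?nz_lin //; lia.
  apply/prodf_neq0 => t _; have := ltn_ord t => ht.
  by rewrite mulf_neq0 ?natr_neq0 ?nz_lin //; lia.
have := WZ (c I J * (k3 * k2))^-1 (W_iter WD2 J (W_iter WD3 I Ww)).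
by rewrite key /Y scalerA mulVf // scale1r.
Qed.

End Irr.

Lemma Cbar_irr : irred_submodule_Gamma (Cbar a d) 0 d.
Proof.
have hsub : sl3_submodule (Cbar a d).
  split.
    split; [|split].
    - apply/Cbar_Cb; exact: Cb0.
    - move=> p q /Cbar_Cb hp /Cbar_Cb hq; apply/Cbar_Cb; exact: CbD.
    - move=> c p /Cbar_Cb hp; apply/Cbar_Cb; exact: CbZ.
  move=> p /Cbar_Cb /Cb_stable [h1 [h2 [h3 [h4 [h5 [h6 [h7 h8]]]]]]].
  split; [apply/Cbar_Cb; exact: h1|].
  split; [apply/Cbar_Cb; exact: h2|].
  split; [apply/Cbar_Cb; exact: h3|].
  split; [apply/Cbar_Cb; exact: h4|].
  split; [apply/Cbar_Cb; exact: h5|].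
  split; [apply/Cbar_Cb; exact: h6|].
  split; apply/Cbar_Cb; [exact: h7 | exact: h8].
have Ca : Cbar a d a by apply/Cbar_Cb; exact: (Cb_v 0 0).
split => //.
- exists sl => p; split => [/Cbar_Cb/Cb_span //|/Cb_span/Cbar_Cb //].
- split; first by exists a; split => //; exact: a_neq0.
  move=> W hW hWsub.
  case: (classic (exists w, W w /\ w != 0)) => [[w [Ww wn0]]|hno].
    by right; apply: (W_all hW); exact: (W_a hW hWsub Ww wn0).
  left => p Wp; apply/eqP; apply: contraT => pn0; exfalso; apply: hno.
  by exists p.
- exists a; split => //.
  split; first exact: a_neq0.
  split; first exact: D1a.
  split; first exact: D2a.
  split; first exact: D3a.
  split; first by rewrite E1a scale0r.
  by rewrite E2a l2E.
Qed.

Lemma cas_contra : inKA a -> contravariant d (casimir a d).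
Proof.
move=> ha; split; first exact: homog_cas.
split; first exact: D1_cas.
split; first exact: D2_cas.
split; first exact: D3_cas.
split; first exact: hD1_cas.
split; first exact: hD2_cas.
split; first exact: hD3_cas.
split; [exact: E1_cas | exact: E2_cas].
Qed.

End PartD.

Local Close Scope ring_scope.
Unset Implicit Arguments.
Set Strict Implicit.

Theorem mainTheorem7 (K : fieldType) (n d : nat) (a : KAu K n) :
  [pchar K]%R =i pred0 -> (0 < n)%N ->
  inKA a -> homogA a -> isobaric a -> UTinv a -> irreducible_inv a ->
  is_ord (@hD1 K n) a 0 -> is_ord (@hD2 K n) a d ->
  irred_submodule_Gamma (Cbar a d) 0 d /\ contravariant d (casimir a d).
Proof.
move=> char0 _ hKA _ [an0 [l1 [l2 [E1a' E2a']]]] [D1a [D2a D3a]] _ [_ hd1] [hd2n hd2].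
have hD1a : hD1 a = 0%R := hd1 1 (ltn0Sn 0).
have vtop : v a 0 d.+1 = 0%R := hd2 d.+1 (ltnSn d).
have vd : v a 0 d != 0%R := hd2n.
split.
  exact: (@Cbar_irr K n a hD1a D1a D2a D3a l2 E2a' d char0 vtop vd).
eapply (@cas_contra K n a); eassumption.
Qed.
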